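(* Let $p\ge 1$ and $q\ge 3$ be integers. If $H$ is a graph that is $Q$-cospectral with the jellyfish graph $JFG(p,q)$, then $\det(Q(H))\in\{0,4\}$.
   Context: All graphs are finite and simple. The jellyfish graph $JFG(p,q)$ is obtained from a cycle $C_q$ and $q$ copies of the star $K_{1,p}$ by identifying each vertex of $C_q$ with the center (vertex of maximum degree) of a distinct copy of $K_{1,p}$. The signless Laplacian matrix is $Q(G)=A(G)+D(G)$, with $A(G)$ the adjacency matrix and $D(G)$ the diagonal degree matrix. Two graphs are $Q$-cospectral if their signless Laplacian matrices have the same spectrum. *)

(* Defs.v *)
From mathcomp Require Import all_boot all_order all_algebra.
Set Implicit Arguments. Unset Strict Implicit. Unset Printing Implicit Defensive.
Import GRing.Theory Num.Theory.
Local Open Scope ring_scope.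

Definition simple_graph (n : nat) (e : rel 'I_n) : Prop :=
  symmetric e /\ irreflexive e.

Definition deg (n : nat) (e : rel 'I_n) (i : 'I_n) : nat := #|[set j | e i j]|.

Definition adjmx (n : nat) (e : rel 'I_n) : 'M[int]_n :=
  \matrix_(i, j) (e i j)%:R.
Definition degmx (n : nat) (e : rel 'I_n) : 'M[int]_n :=
  \matrix_(i, j) (if i == j then (deg e i)%:R else 0).
Definition Qmx (n : nat) (e : rel 'I_n) : 'M[int]_n := adjmx e + degmx e.

(* Q-cospectral: the signless Laplacians have the same spectrum, i.e. the same
   characteristic polynomial (as matrices of possibly different sizes; equal
   characteristic polynomials forces equal order). *)
Definition Q_cospectral (n m : nat) (e1 : rel 'I_n) (e2 : rel 'I_m) : Prop :=
  char_poly (Qmx e1) = char_poly (Qmx e2).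

(* Jellyfish graph JFG(p,q) on vertex set 'I_(q * (p+1)):
   vertex v encodes block  v %/ (p+1)  (a vertex of C_q) and position
   v %% (p+1); position 0 is the cycle vertex (centre of the star), positions
   1..p are the p pendant leaves of the star attached to it. *)
Definition jf_blk (p : nat) (v : nat) : nat := (v %/ p.+1)%N.
Definition jf_pos (p : nat) (v : nat) : nat := (v %% p.+1)%N.

Definition jf_adj (p q : nat) : rel 'I_(q * p.+1) :=
  fun u v =>
    if (jf_pos p u == 0%N) && (jf_pos p v == 0%N) then
      (jf_blk p v == (jf_blk p u).+1 %% q)%N || (jf_blk p u == (jf_blk p v).+1 %% q)%N
    else
      (jf_blk p u == jf_blk p v) && ((jf_pos p u == 0%N) != (jf_pos p v == 0%N)).
Arguments jf_adj p q : clear implicits.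

(* Main.v *)
Require Import Defs.
From mathcomp Require Import all_boot all_order all_fingroup all_algebra zify.

Section JF.
Variables p q : nat.
Hypothesis hq : (3 <= q)%N.
Local Notation N := (q * p.+1)%N.

Definition onat (v : nat) : nat :=
  ((if v %% p.+1 == 0 then (v %/ p.+1).+1 %% q else v %/ p.+1) * p.+1)%N.

Lemma mul_eq x v : (x * p.+1 == v) = (x == v %/ p.+1) && (v %% p.+1 == 0).
Proof.
apply/eqP/andP.
  by move<-; rewrite mulnK // modnMl.
by case=> /eqP-> /eqP h; rewrite [RHS](divn_eq v p.+1) h addn0.
Qed.

Lemma blk_lt v : v < N -> v %/ p.+1 < q.
Proof. by move=> h; rewrite ltn_divLR. Qed.

Lemma onat_lt v : v < N -> onat v < N.
Proof.
move=> h; rewrite /onat ltn_pmul2r //.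
case: ifP => _; last exact: blk_lt.
by rewrite ltn_pmod //; lia.
Qed.

Lemma onat_pos v : onat v %% p.+1 = 0.
Proof. by rewrite /onat modnMl. Qed.

Lemma onat_blk v : onat v %/ p.+1 =
  (if v %% p.+1 == 0 then (v %/ p.+1).+1 %% q else v %/ p.+1).
Proof. by rewrite /onat mulnK. Qed.

Lemma succ_mod b : b < q -> b.+1 %% q = if b.+1 == q then 0 else b.+1.
Proof.
move=> h; case: eqP => [->|ne]; first by rewrite modnn.
by rewrite modn_small //; lia.
Qed.

Lemma succ_neq b : b < q -> b.+1 %% q != b.
Proof. by move=> h; rewrite succ_mod //; case: ifP => /eqP ?; apply/eqP; lia. Qed.

Lemma succ2_neq b : b < q -> (b.+1 %% q).+1 %% q != b.
Proof.
move=> h; rewrite (@succ_mod b h); case: ifP => /eqP e.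
  rewrite succ_mod; last lia. case: ifP => /eqP ?; apply/eqP; lia.
rewrite succ_mod; last lia. case: ifP => /eqP ?; apply/eqP; lia.
Qed.

Lemma succ_inj b c : b < q -> c < q -> b.+1 %% q = c.+1 %% q -> b = c.
Proof.
move=> hb hc; rewrite !succ_mod //; do 2 case: ifP => /eqP ?; lia.
Qed.

Lemma onat_neq v : v < N -> onat v != v.
Proof.
move=> h; rewrite /onat mul_eq; case: ifP => h0; rewrite ?andbT ?andbF //.
exact: (@succ_neq _ (@blk_lt v h)).
Qed.

Lemma onat_2cyc u w : u < N -> w < N -> onat u = w -> onat w = u -> False.
Proof.
move=> hu hw e1 e2.
have pw : w %% p.+1 = 0 by rewrite -e1 onat_pos.
have pu : u %% p.+1 = 0 by rewrite -e2 onat_pos.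
have bw : w %/ p.+1 = (u %/ p.+1).+1 %% q by rewrite -e1 onat_blk pu eqxx.
have bu : u %/ p.+1 = (w %/ p.+1).+1 %% q by rewrite -e2 onat_blk pw eqxx.
by move: (@succ2_neq _ (@blk_lt u hu)); rewrite -bw -bu eqxx.
Qed.

Lemma jf_adj_nat (u w : 'I_N) :
  jf_adj p q u w = (onat u == w) || (onat w == u).
Proof.
rewrite /jf_adj /jf_pos /jf_blk /onat !mul_eq.
case: (u %% p.+1 == 0); case: (w %% p.+1 == 0);
  rewrite /= ?andbT ?andbF ?orbF //= eq_sym //.
by rewrite [X in _ || X]eq_sym.
Qed.


Definition o (v : 'I_N) : 'I_N := insubd v (onat v).

Lemma oE v : val (o v) = onat v.
Proof. by rewrite /o insubdK //; apply: onat_lt. Qed.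

Lemma jf_adj_o (u w : 'I_N) : jf_adj p q u w = (o u == w) || (o w == u).
Proof. by rewrite jf_adj_nat -!val_eqE /= !oE. Qed.

Lemma o_neq v : o v != v.
Proof. by rewrite -val_eqE /= oE onat_neq. Qed.

Lemma o_2cyc u w : o u = w -> o w = u -> False.
Proof.
move=> e1 e2; apply: (@onat_2cyc u w) => //; rewrite -oE; first by rewrite e1.
by rewrite e2.
Qed.

Lemma o_pos v : val (o v) %% p.+1 = 0.
Proof. by rewrite oE onat_pos. Qed.

Lemma o_blk_ctr v : val v %% p.+1 = 0 -> val (o v) %/ p.+1 = (val v %/ p.+1).+1 %% q.
Proof. by move=> h; rewrite oE onat_blk h eqxx. Qed.

Lemma o_blk_leaf v : val v %% p.+1 != 0 -> val (o v) %/ p.+1 = val v %/ p.+1.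
Proof. by move=> h; rewrite oE onat_blk (negbTE h). Qed.

Lemma ctr_eq (u w : 'I_N) : val u %% p.+1 = 0 -> val w %% p.+1 = 0 ->
  val u %/ p.+1 = val w %/ p.+1 -> u = w.
Proof.
move=> hu hw hb; apply: val_inj.
by rewrite /= (divn_eq u p.+1) (divn_eq w p.+1) hu hw hb.
Qed.

Lemma iter_o (c : 'I_N) k : val c %% p.+1 = 0 ->
  val (iter k o c) %% p.+1 = 0 /\ val (iter k o c) %/ p.+1 = (val c %/ p.+1 + k) %% q.
Proof.
move=> hc; elim: k => [|k [ih1 ih2]] /=.
  by rewrite hc addn0 modn_small // blk_lt.
split; first exact: o_pos.
by rewrite o_blk_ctr // ih2 -addn1 modnDml addn1 addnS.
Qed.

Lemma iter_o_reach (c c' : 'I_N) : val c %% p.+1 = 0 -> val c' %% p.+1 = 0 ->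
  exists k, iter k o c = c'.
Proof.
move=> hc hc'; exists (val c' %/ p.+1 + q - val c %/ p.+1).
have [h1 h2] := @iter_o c (nat_of_ord c' %/ p.+1 + q - nat_of_ord c %/ p.+1) hc.
apply: ctr_eq => //; rewrite h2 /=.
have l1 := @blk_lt c (ltn_ord c); have l2 := @blk_lt c' (ltn_ord c').
have -> : (nat_of_ord c %/ p.+1 + (nat_of_ord c' %/ p.+1 + q - nat_of_ord c %/ p.+1)) = nat_of_ord c' %/ p.+1 + q by move: l1 l2; generalize (nat_of_ord c %/ p.+1) (nat_of_ord c' %/ p.+1); lia.
by rewrite modnDr modn_small.
Qed.

Lemma o_pred (c : 'I_N) : val c %% p.+1 = 0 -> o (iter q.-1 o c) = c.
Proof.
move=> hc; have [h1 h2] := @iter_o c q hc.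
have -> : o (iter q.-1 o c) = iter q o c by rewrite -iterS prednK //; lia.
apply: ctr_eq => //; rewrite h2 modnDr modn_small //.
exact: (@blk_lt c (ltn_ord c)).
Qed.


Definition rho_fun (v : 'I_N) : 'I_N := if val v %% p.+1 == 0 then o v else v.

Lemma rho_inj : injective rho_fun.
Proof.
move=> u w; rewrite /rho_fun.
case: (eqVneq (val u %% p.+1) 0) => hu; case: (eqVneq (val w %% p.+1) 0) => hw e.
- have e1 : val (o u) %/ p.+1 = val (o w) %/ p.+1 by rewrite e.
  rewrite !o_blk_ctr // in e1.
  apply: ctr_eq => //; apply: (@succ_inj (val u %/ p.+1) (val w %/ p.+1)) => //.
    exact: (@blk_lt u (ltn_ord u)).
  exact: (@blk_lt w (ltn_ord w)).
- by move: (o_pos u); rewrite e => h; rewrite h eqxx in hw.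
- by move: (o_pos w); rewrite -e => h; rewrite h eqxx in hu.
- exact: e.
Qed.

Definition rho : 'S_N := perm rho_inj.

Lemma perm_cases (s : 'S_N) : (forall v, s v = v \/ s v = o v) -> s = 1%g \/ s = rho.
Proof.
move=> H.
have prop : forall v, s v != v -> s (o v) != o v.
  move=> v nv; have sv : s v = o v by case: (H v) => // e; rewrite e eqxx in nv.
  apply/eqP => e; apply: (negP (o_neq v)); apply/eqP; apply: (@perm_inj _ s).
  by rewrite e sv.
have propk : forall k v, s v != v -> s (iter k o v) != iter k o v.
  by elim=> [|k ih] v nv //=; apply: prop; apply: ih.
have leaf : forall l, val l %% p.+1 != 0 -> s l = l.
  move=> l hl; case: (H l) => // sl.
  have nl : s l != l by rewrite sl o_neq.
  have hc : val (o l) %% p.+1 = 0 := o_pos l.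
  have sc := prop l nl.
  have sc' := propk q.-1 _ sc.
  have [hc' _] := @iter_o (o l) q.-1 hc.
  have e : s (iter q.-1 o (o l)) = o l.
    by case: (H (iter q.-1 o (o l))) => [e|->]; [rewrite e eqxx in sc' | rewrite o_pred].
  have e2 : s (iter q.-1 o (o l)) = s l by rewrite e sl.
  move/perm_inj: e2 => e2.
  by move: hc'; rewrite e2 /= => hc'; rewrite hc' eqxx in hl.
case: (boolP [exists c : 'I_N, (val c %% p.+1 == 0) && (s c != c)]).
  case/existsP => c0 /andP [/eqP h0 n0]; right; apply/permP => v.
  rewrite permE /rho_fun; case: ifP => [/eqP hv|/negbT hv]; last exact: leaf.
  have [k <-] := @iter_o_reach c0 v h0 hv.
  by case: (H (iter k o c0)) => // e; move: (propk k c0 n0); rewrite e eqxx.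
rewrite negb_exists => /forallP hall; left; apply/permP => v.
rewrite perm1; case: (eqVneq (val v %% p.+1) 0) => [hv|hv]; last exact: leaf.
by move: (hall v); rewrite hv eqxx /= negbK => /eqP.
Qed.


Import GRing.Theory.
Local Open Scope ring_scope.

Definition Mx : 'M[int]_N := \matrix_(v, u) ((u == v) || (u == o v))%:R.

Lemma N_gt0 : (0 < N)%N.
Proof. rewrite muln_gt0 /=; lia. Qed.

Lemma det_Mx : \det Mx = 0 \/ \det Mx = 2.
Proof.
have rho1 : rho != 1%g.
  apply/eqP => /permP /(_ (Ordinal N_gt0)); rewrite permE perm1 /rho_fun /=.

  by move/eqP; rewrite (negbTE (o_neq _)).
have t1 : \prod_i Mx i ((1%g : 'S_N) i) = 1.
  by apply: big1 => v _; rewrite mxE perm1 eqxx.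
have tr : \prod_i Mx i (rho i) = 1.
  apply: big1 => v _; rewrite mxE permE /rho_fun; case: ifP => _; by rewrite eqxx ?orbT.
have t0 : \sum_(s : 'S_N | (s != 1%g) && (s != rho)) (-1) ^+ s * \prod_i Mx i (s i) = 0.
  apply: big1 => s /andP [n1 nr].
  have : ~~ [forall v, (s v == v) || (s v == o v)].
    apply/negP => /forallP hall.
    have [e|e] : s = 1%g \/ s = rho.
      by apply: perm_cases => v; case/orP: (hall v) => /eqP ->; [left|right].
    by rewrite e eqxx in n1.
    by rewrite e eqxx in nr.
  rewrite negb_forall => /existsP [v hv].
  by rewrite (bigD1 v) //= mxE (negbTE hv) mul0r mulr0.
rewrite /determinant (bigD1 1%g) //= (bigD1 rho) /=; last by rewrite rho1.
rewrite t1 tr t0 odd_perm1 expr0 mul1r addr0 mulr1; case: (odd_perm rho); rewrite /=.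
  by left; rewrite expr1 addrN.
by right.
Qed.

Lemma sum_bool (P : pred 'I_N) : \sum_v ((P v)%:R : int) = (#|P|)%:R.
Proof.
rewrite -sum1_card natr_sum [RHS]big_mkcond /=; apply: eq_bigr => v _.
by rewrite unfold_in; case: (P v).
Qed.

Lemma Q_eq : Qmx (jf_adj p q) = Mx^T *m Mx.
Proof.
apply/matrixP => u w; rewrite !mxE.
under eq_bigr => v _ do rewrite !mxE.
have mb : forall b1 b2 : bool, (b1%:R * b2%:R : int) = (b1 && b2)%:R by do 2 case.
under eq_bigr => v _ do rewrite mb.
rewrite (sum_bool (fun v => ((u == v) || (u == o v)) && ((w == v) || (w == o v)))).
case: (eqVneq u w) => [<-|nuw].
  rewrite jf_adj_o (negbTE (o_neq u)) /= add0r /deg; apply: congr1.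
  rewrite (@eq_card _ _ [predU1 o u & [pred j | o j == u]]); last first.
    by move=> j; rewrite !inE jf_adj_o eq_sym.
  rewrite cardU1 [RHS](@eq_card _ _ [predU1 u & [pred j | o j == u]]); last first.
    by move=> j; rewrite -topredE /= !inE andbb eq_sym [u == o j]eq_sym.
  rewrite [RHS]cardU1 !inE (negbTE (o_neq u)).
  case: (eqVneq (o (o u)) u) => // e; case: (@o_2cyc u (o u) erefl e).
rewrite jf_adj_o addr0; apply: congr1.
case: (eqVneq (o u) w) => e1; case: (eqVneq (o w) u) => e2 /=.
- by case: (@o_2cyc u w e1 e2).
- symmetry; rewrite -(card1 u); apply: eq_card => v; rewrite -topredE /= ?inE.
  subst w; case: (eqVneq v u) => [->|nvu]; first by rewrite eqxx orbT.
  apply/negbTE/negP => /andP[/= /eqP h /orP[/eqP h'|/eqP h']].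
  + by rewrite h' -h eqxx in e2.
  + by rewrite h' -h eqxx in nuw.
- symmetry; rewrite -(card1 w); apply: eq_card => v; rewrite -topredE /= ?inE.
  subst u; case: (eqVneq v w) => [->|nvw]; first by rewrite eqxx !orbT.
  apply/negbTE/negP => /andP[/orP[/eqP h'|/eqP h'] /= /eqP h].
  + by rewrite h' -h eqxx in e1.
  + by rewrite h' -h eqxx in nuw.
- symmetry; apply: eq_card0 => v; rewrite -topredE /= ?inE.
  apply/negP => /andP[/orP[/eqP h|/eqP h] /orP[/eqP h'|/eqP h']].
  + by rewrite h h' eqxx in nuw.
  + by rewrite h h' eqxx in e1.
  + by rewrite h h' eqxx in e2.
  + by rewrite h h' eqxx in nuw.
Qed.

Lemma det_jf : \det (Qmx (jf_adj p q)) = 0 \/ \det (Qmx (jf_adj p q)) = 4.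
Proof.
rewrite Q_eq det_mulmx det_tr.
by case: det_Mx => ->; [left; rewrite mulr0 | right].
Qed.

End JF.

Import GRing.Theory.
Local Open Scope ring_scope.

Theorem lemma3p7 (p q : nat) (hp : (1 <= p)%N) (hq : (3 <= q)%N)
  (n : nat) (e : rel 'I_n) :
  simple_graph e ->
  Q_cospectral e (jf_adj p q) ->
  \det (Qmx e) = 0 \/ \det (Qmx e) = 4.
Proof.
move=> _ H.
have hn : n = (q * p.+1)%N.
  by have := size_char_poly (Qmx e); rewrite H size_char_poly => -[].
have h1 := char_poly_det (Qmx e); have h2 := char_poly_det (Qmx (jf_adj p q)).
rewrite H h2 in h1.
have sg : ((-1) ^+ n : int) = (-1) ^+ (q * p.+1)%N by rewrite hn.
rewrite sg in h1.
have := congr1 (fun x => (-1) ^+ (q * p.+1)%N * x) h1; rewrite /= !signrMK => <-.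
exact: det_jf.
Qed.
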